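(* In $NOM$, writing $\phi\vee\psi$ for $\neg(\neg\phi\wedge\neg\psi)$, the following rules are derivable for all finite sequences $\Gamma$ and formulas $\phi,\psi,\chi$: from $\Gamma\vdash\phi$ infer $\Gamma\vdash\phi\vee\psi$; from $\Gamma\vdash\psi$ infer $\Gamma\vdash\phi\vee\psi$; and from the five premises $\Gamma\vdash\phi\vee\psi$, $\Gamma,\phi\vdash\chi$, $\Gamma,\psi\vdash\chi$, $\Gamma,\chi,\phi\vdash\chi$, $\Gamma,\chi,\psi\vdash\chi$ infer $\Gamma\vdash\chi$.
   Context: The propositional deductive system $NOM$: formulas are built from propositional letters using $\wedge$, $\rightarrow$, $\neg$. Sequents are $\phi_1,\ldots,\phi_n\vdash\psi$ ($n\ge0$) with antecedent a finite ordered sequence. With $\Gamma$ a finite possibly empty sequence of formulas and $\phi,\psi,\chi$ formulas, the rules of $NOM$ are: (assumption) $\Gamma,\phi\vdash\phi$; (cut) $\Gamma\vdash\phi$, $\Gamma,\phi\vdash\psi$ $\Rightarrow$ $\Gamma\vdash\psi$; (paste) $\Gamma\vdash\phi$, $\Gamma\vdash\psi$ $\Rightarrow$ $\Gamma,\phi\vdash\psi$; (compatible exchange) $\Gamma,\phi,\psi\vdash\phi$, $\Gamma,\phi,\psi\vdash\chi$, $\Gamma,\psi,\phi\vdash\psi$ $\Rightarrow$ $\Gamma,\psi,\phi\vdash\chi$; ($\wedge$-intro) $\Gamma\vdash\phi$, $\Gamma\vdash\psi$ $\Rightarrow$ $\Gamma\vdash\phi\wedge\psi$; ($\wedge$-elim)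 $\Gamma\vdash\phi\wedge\psi$ $\Rightarrow$ $\Gamma\vdash\phi$ and $\Rightarrow$ $\Gamma\vdash\psi$; ($\rightarrow$-intro) $\Gamma,\phi\vdash\psi$ $\Rightarrow$ $\Gamma\vdash\phi\rightarrow\psi$; ($\rightarrow$-elim) $\Gamma\vdash\phi\rightarrow\psi$ $\Rightarrow$ $\Gamma,\phi\vdash\psi$; (excluded middle) $\Gamma,\phi\vdash\psi$, $\Gamma,\neg\phi\vdash\psi$ $\Rightarrow$ $\Gamma\vdash\psi$; (explosion) $\Gamma\vdash\neg\phi$ $\Rightarrow$ $\Gamma,\phi\vdash\psi$. A rule schema is derivable if in every instance its conclusion can be derived from its premises using these rules. *)

(* Defs.v *)
From Stdlib Require Import List.
Import ListNotations.

Inductive form : Type :=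
| Var : nat -> form
| And : form -> form -> form
| Imp : form -> form -> form
| Neg : form -> form.

Definition Or (phi psi : form) : form := Neg (And (Neg phi) (Neg psi)).

(* Sequents Gamma |- phi with Gamma an ordered finite list; "Gamma, phi" is
   Gamma ++ [phi].  [Der Hyp G phi] : the sequent G |- phi is derivable in NOM
   from the extra premise sequents in Hyp (used to express derivability of
   a rule: its conclusion is derivable from its premises). *)
Inductive Der (Hyp : list form -> form -> Prop) : list form -> form -> Prop :=
| d_prem : forall G phi, Hyp G phi -> Der Hyp G phi
| d_assum : forall G phi, Der Hyp (G ++ [phi]) phi
| d_cut : forall G phi psi,
    Der Hyp G phi -> Der Hyp (G ++ [phi]) psi -> Der Hyp G psi
| d_paste : forall G phi psi,
    Der Hyp G phi -> Der Hyp G psi -> Der Hyp (G ++ [phi]) psi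
| d_cexch : forall G phi psi chi,
    Der Hyp (G ++ [phi; psi]) phi ->
    Der Hyp (G ++ [phi; psi]) chi ->
    Der Hyp (G ++ [psi; phi]) psi ->
    Der Hyp (G ++ [psi; phi]) chi
| d_andI : forall G phi psi,
    Der Hyp G phi -> Der Hyp G psi -> Der Hyp G (And phi psi)
| d_andE1 : forall G phi psi, Der Hyp G (And phi psi) -> Der Hyp G phi
| d_andE2 : forall G phi psi, Der Hyp G (And phi psi) -> Der Hyp G psi
| d_impI : forall G phi psi,
    Der Hyp (G ++ [phi]) psi -> Der Hyp G (Imp phi psi)
| d_impE : forall G phi psi,
    Der Hyp G (Imp phi psi) -> Der Hyp (G ++ [phi]) psi
| d_em : forall G phi psi,
    Der Hyp (G ++ [phi]) psi -> Der Hyp (G ++ [Neg phi]) psi -> Der Hyp G psi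
| d_expl : forall G phi psi,
    Der Hyp G (Neg phi) -> Der Hyp (G ++ [phi]) psi.

Definition premises (l : list (list form * form)) : list form -> form -> Prop :=
  fun G phi => In (G, phi) l.

(* Main.v *)
Require Import Defs.
From Stdlib Require Import List.
Import ListNotations.

Lemma cex H G x y X :
  Der H ((G ++ [x]) ++ [y]) x -> Der H ((G ++ [x]) ++ [y]) X ->
  Der H ((G ++ [y]) ++ [x]) y -> Der H ((G ++ [y]) ++ [x]) X.
Proof.
  intros h1 h2 h3. rewrite <- app_assoc in *. simpl in *.
  exact (d_cexch H G x y X h1 h2 h3).
Qed.

Lemma absurd2 H G a b X : Der H G (Neg a) -> Der H ((G ++ [a]) ++ [b]) X.
Proof. intros h. apply d_expl. apply d_expl. exact h. Qed.

Lemma dne H G a : Der H G (Neg (Neg a)) -> Der H G a.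
Proof.
  intros h. apply d_em with a.
  - apply d_assum.
  - apply d_expl. exact h.
Qed.

Lemma dni_imp H G a : Der H G (Imp a (Neg (Neg a))).
Proof.
  apply d_em with (Neg a).
  - apply d_impI. apply d_expl. apply d_assum.
  - apply d_impI. apply d_paste.
    + apply dne. apply d_assum.
    + apply d_assum.
Qed.

Lemma dni H G a : Der H G a -> Der H G (Neg (Neg a)).
Proof.
  intros h. apply d_cut with a; [exact h|]. apply d_impE. apply dni_imp.
Qed.

Lemma mt H G a b : Der H G (Neg b) -> Der H (G ++ [a]) b -> Der H G (Neg a).
Proof.
  intros hb hab. apply d_em with a.
  - apply d_cut with b; [exact hab|].
    apply (cex H G b a (Neg a)).
    + apply absurd2. exact hb.
    + apply absurd2. exact hb.
    + apply d_paste; [exact hab| apply d_assum].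
  - apply d_assum.
Qed.

Lemma sw H G a b X :
  Der H (G ++ [a]) b -> Der H (G ++ [b]) a -> Der H (G ++ [b]) X -> Der H (G ++ [a]) X.
Proof.
  intros h1 h2 h3. apply d_cut with b; [exact h1|].
  apply (cex H G b a X).
  - apply d_paste; [exact h2| apply d_assum].
  - apply d_paste; [exact h2| exact h3].
  - apply d_paste; [exact h1| apply d_assum].
Qed.

Lemma pers H D X Y :
  Der H D X -> (forall T, Der H (T ++ [Y]) X) -> Der H (D ++ [Neg Y]) X.
Proof.
  intros hX hY. apply d_em with X.
  - apply d_assum.
  - apply (cex H D (Neg X) (Neg Y) X).
    + apply absurd2. apply dni. exact hX.
    + apply absurd2. apply dni. exact hX.
    + apply mt with X.
      * apply d_assum.
      * apply hY.
Qed.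

Lemma contra H G p c :
  Der H (G ++ [p]) c -> Der H ((G ++ [c]) ++ [p]) c -> Der H (G ++ [Neg c]) (Neg p).
Proof.
  intros h1 h2.
  set (Z := Imp p c). set (K := And c Z).
  assert (hGZ : Der H G Z) by (apply d_impI; exact h1).
  assert (hcK : Der H (G ++ [c]) K) by (apply d_andI; [apply d_assum| apply d_impI; exact h2]).
  assert (hb : forall T, Der H (T ++ [Neg c]) (Neg K)).
  { intros T. apply mt with c; [apply d_assum|]. apply d_andE1 with Z. apply d_assum. }
  assert (hc' : Der H ((G ++ [Neg K]) ++ [c]) (Neg K)).
  { apply sw with (Neg (Neg c)).
    - apply dni. apply d_assum.
    - apply dne. apply d_assum.
    - apply pers; [apply d_assum| exact hb]. }
  assert (habs : forall X, Der H ((G ++ [Neg K]) ++ [c]) X).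
  { intros X. apply (cex H G c (Neg K) X).
    - apply d_expl. apply dni. exact hcK.
    - apply d_expl. apply dni. exact hcK.
    - exact hc'. }
  assert (hKc : Der H (G ++ [Neg K]) (Neg c)).
  { apply d_em with c; [apply habs| apply d_assum]. }
  assert (hKp : Der H (G ++ [Neg K]) (Neg p)).
  { assert (hZ : Der H (G ++ [Neg K]) Z).
    { apply pers; [exact hGZ|]. intros T. apply d_andE2 with c. apply d_assum. }
    apply mt with c; [exact hKc|]. apply d_impE. exact hZ. }
  apply sw with (Neg K); [apply hb| exact hKc| exact hKp].
Qed.

Theorem corollary4p6 :
  (forall (G : list form) (phi psi : form),
      Der (premises [(G, phi)]) G (Or phi psi)) /\
  (forall (G : list form) (phi psi : form),
      Der (premises [(G, psi)]) G (Or phi psi)) /\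
  (forall (G : list form) (phi psi chi : form),
      Der (premises [(G, Or phi psi); (G ++ [phi], chi); (G ++ [psi], chi);
                     (G ++ [chi; phi], chi); (G ++ [chi; psi], chi)])
          G chi).
Proof.
  split; [|split].
  - intros G phi psi. unfold Or. apply mt with (Neg phi).
    + apply dni. apply d_prem. unfold premises. simpl. auto.
    + apply d_andE1 with (Neg psi). apply d_assum.
  - intros G phi psi. unfold Or. apply mt with (Neg psi).
    + apply dni. apply d_prem. unfold premises. simpl. auto.
    + apply d_andE2 with (Neg phi). apply d_assum.
  - intros G phi psi chi.
    set (Hs := premises _).
    assert (hA : Der Hs G (Or phi psi)) by (apply d_prem; unfold Hs, premises; simpl; auto 10).
    assert (hp : Der Hs (G ++ [Neg chi]) (Neg phi)).
    { apply contra; apply d_prem; unfold Hs, premises; simpl;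
        try rewrite <- app_assoc; simpl; auto 10. }
    assert (hq : Der Hs (G ++ [Neg chi]) (Neg psi)).
    { apply contra; apply d_prem; unfold Hs, premises; simpl;
        try rewrite <- app_assoc; simpl; auto 10. }
    apply dne. apply mt with (And (Neg phi) (Neg psi)).
    + exact hA.
    + apply d_andI; assumption.
Qed.
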